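(* $\mathcal{L}$ is closed under weak limits: if $\mu_n\in\mathcal{L}$ and $\mu_n\to\mu$ weakly for a probability measure $\mu$ on $\mathbb{R}$, then $\mu\in\mathcal{L}$.
   Context: For a probability measure $\mu$ on $\mathbb{R}$, $G_\mu(z)=\int\frac{d\mu(x)}{z-x}$ and $F_\mu=1/G_\mu$ on the upper half-plane $\mathbb{C}^+$. $\mathcal{L}$ is the set of probability measures $\mu$ on $\mathbb{R}$ with $F_\mu(z+2\pi)=F_\mu(z)+2\pi$ for all $z\in\mathbb{C}^+$. *)

(* Defs.v *)
From HB Require Import structures.
From mathcomp Require Import all_boot all_order all_algebra.
From mathcomp Require Import all_classical all_reals all_analysis.
From mathcomp Require Import complex.
Set Implicit Arguments. Unset Strict Implicit. Unset Printing Implicit Defensive.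
Import Order.TTheory GRing.Theory Num.Theory.
Import numFieldNormedType.Exports.
Local Open Scope classical_set_scope.
Local Open Scope ring_scope.
Local Open Scope complex_scope.

(* Probability measures on R are [probability R R] (Borel sigma-algebra on R). *)

(* Cauchy transform G_mu(z) = \int dmu(x)/(z-x); the complex integral is the
   integral of the real part plus i times the integral of the imaginary part. *)
Definition cauchyG (R : realType) (mu : probability R R) (z : R[i]) : R[i] :=
  (Rintegral mu setT (fun x : R => complex.Re (z - x%:C)^-1))
  +i* (Rintegral mu setT (fun x : R => complex.Im (z - x%:C)^-1)).

Definition cauchyF (R : realType) (mu : probability R R) (z : R[i]) : R[i] :=
  (cauchyG mu z)^-1.

Definition classL (R : realType) (mu : probability R R) : Prop :=
  forall z : R[i], 0 < complex.Im z ->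
    cauchyF mu (z + (2 * pi)%:C) = cauchyF mu z + (2 * pi)%:C.

Definition weak_cvg (R : realType) (mu_ : nat -> probability R R)
    (mu : probability R R) : Prop :=
  forall f : R -> R, continuous f -> (exists M : R, forall x, `|f x| <= M) ->
    (fun n => Rintegral (mu_ n) setT f) @ \oo --> Rintegral mu setT f.

(* Main.v *)
Require Import Defs.
From HB Require Import structures.
From mathcomp Require Import all_boot all_order all_algebra.
From mathcomp Require Import all_classical all_reals all_analysis.
From mathcomp Require Import complex.
From mathcomp Require Import lra measurable_realfun.
Set Implicit Arguments. Unset Strict Implicit. Unset Printing Implicit Defensive.
Import Order.TTheory GRing.Theory Num.Theory.
Import numFieldNormedType.Exports.
Local Open Scope classical_set_scope.
Local Open Scope ring_scope.
Local Open Scope complex_scope.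

Section Aux.
Variable R : realType.

Definition den (a b x : R) := (a - x) ^+ 2 + b ^+ 2.

Lemma den_gt0 a b x : 0 < b -> 0 < den a b x.
Proof. move=> hb; rewrite /den; apply: ltr_wpDl; [exact: sqr_ge0|exact: exprn_gt0]. Qed.

Lemma cont_den a b : continuous (den a b).
Proof.
move=> x.
have -> : den a b = (((cst a - id) \* (cst a - id)) + cst (b ^+ 2))%R.
  by apply/funext => y; rewrite /den expr2.
apply: continuousD; last exact: cvg_cst.
apply: continuousM; apply: continuousB; (exact: cvg_cst || exact: cvg_id).
Qed.

Lemma cont_rat a b (p : R -> R) : 0 < b -> continuous p ->
  continuous (fun x => p x / den a b x).
Proof.
move=> hb hp x.
have -> : (fun x => p x / den a b x) = (p \* (fun x => (den a b x)^-1)) by [].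
apply: continuousM; first exact: hp. apply: continuousV.
  by rewrite gt_eqF // den_gt0.
exact: cont_den.
Qed.


Lemma reI a b x : complex.Re ((a +i* b) - x%:C)^-1 = (a - x) / den a b x.
Proof. by rewrite /= subr0. Qed.

Lemma imI a b x : complex.Im ((a +i* b) - x%:C)^-1 = - (b / den a b x).
Proof. by rewrite /= subr0. Qed.

Lemma bnd_aux (c b : R) : 0 < b -> `|c| * b <= c ^+ 2 + b ^+ 2.
Proof. move=> hb. rewrite -(real_normK (num_real c)). have := normr_ge0 c. nra. Qed.

Lemma bnd_re a b x : 0 < b -> `|(a - x) / den a b x| <= b^-1.
Proof.
move=> hb; have hd := den_gt0 a x hb.
rewrite normrM normfV (gtr0_norm hd) ler_pdivrMr // ler_pdivlMl //.
rewrite mulrC; exact: bnd_aux.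
Qed.

Lemma bnd_im a b x : 0 < b -> `|- (b / den a b x)| <= b^-1.
Proof.
move=> hb; have hd := den_gt0 a x hb.
rewrite normrN normrM normfV (gtr0_norm hd) (gtr0_norm hb) ler_pdivrMr //.
rewrite ler_pdivlMl // /den; have := sqr_ge0 (a - x); rewrite [b ^+ 2]expr2; nra.
Qed.


Lemma cvg_re (mu_ : nat -> probability R R) (mu : probability R R) a b :
  weak_cvg mu_ mu -> 0 < b ->
  (fun n => Rintegral (mu_ n) setT (fun x => complex.Re ((a +i* b) - x%:C)^-1))
    @ \oo --> Rintegral mu setT (fun x => complex.Re ((a +i* b) - x%:C)^-1).
Proof.
move=> hw hb; apply: hw.
  have -> : (fun x => complex.Re ((a +i* b) - x%:C)^-1) =
            (fun x => (a - x) / den a b x) by apply/funext => x; rewrite reI.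
  apply: cont_rat => // y; apply: continuousB; (exact: cvg_cst || exact: cvg_id).
by exists b^-1 => x; rewrite reI; exact: bnd_re.
Qed.

Lemma cvg_im (mu_ : nat -> probability R R) (mu : probability R R) a b :
  weak_cvg mu_ mu -> 0 < b ->
  (fun n => Rintegral (mu_ n) setT (fun x => complex.Im ((a +i* b) - x%:C)^-1))
    @ \oo --> Rintegral mu setT (fun x => complex.Im ((a +i* b) - x%:C)^-1).
Proof.
move=> hw hb; apply: hw.
  have -> : (fun x => complex.Im ((a +i* b) - x%:C)^-1) =
            (fun x => (- b) / den a b x) by apply/funext => x; rewrite imI mulNr.
  by apply: cont_rat => // y; exact: cvg_cst.
by exists b^-1 => x; rewrite imI; exact: bnd_im.
Qed.


Lemma im_neg (mu : probability R R) a b : 0 < b ->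
  Rintegral mu setT (fun x => complex.Im ((a +i* b) - x%:C)^-1) < 0.
Proof.
move=> hb.
pose g : R -> R := fun x => b / den a b x.
have gpos x : 0 < g x by rewrite /g divr_gt0 // den_gt0.
have cg : continuous g by apply: cont_rat => // y; exact: cvg_cst.
have mg : measurable_fun setT g := measurable_realfun.continuous_measurable_fun cg.
have mgE : measurable_fun setT (EFin \o g) by apply/measurable_realfun.measurable_EFinP.
rewrite /Rintegral.
rewrite (eq_integral (fun x => - (g x)%:E)%E); last by move=> x _; rewrite imI EFinN.
rewrite integral_ge0N; last by move=> x _; rewrite lee_fin ltW.
set I := (\int[mu]_x (g x)%:E)%E.
have I0 : (0 <= I)%E by apply: integral_ge0 => x _; rewrite lee_fin ltW.
have Ib : (I <= b^-1%:E)%E.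
  apply: (@le_trans _ _ (\int[mu]_x (cst b^-1%:E) x)%E).
    apply: ge0_le_integral => //.
    - by move=> x _; rewrite lee_fin ltW.
    - by move=> x _; rewrite lee_fin /g ler_pdivrMr ?den_gt0 // ler_pdivlMl // /den; have := sqr_ge0 (a - x); rewrite [b ^+ 2]expr2; nra.
  rewrite integral_cst // (_ : (_ * _)%E = b^-1%:E) // -[RHS]mule1; congr (_ * _)%E; exact: (probability_setT mu).
have In0 : I != 0%E.
  apply/eqP => hI.
  have : (\int[mu]_x `|(EFin \o g) x|)%E = 0%E.
    rewrite -hI; apply: eq_integral => x _ /=. by rewrite gtr0_norm.
  move/(ae_eq_integral_abs mu measurableT mgE) => [N [mN muN sN]].
  have : (mu setT <= mu N)%E.
    apply: le_measure; rewrite ?inE //.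
    move=> x _; apply: sN => /= /(_ Logic.I) /= /eqP; rewrite eqe gt_eqF //.
  by rewrite muN probability_setT lee_fin ler10.
move: I0 Ib In0; case: I => [r||] //=.
rewrite !lee_fin eqe => r0 _ rn0.
by rewrite oppr_lt0 lt_def rn0 r0.
Qed.


Lemma cvg_inv (u v : nat -> R) r i :
  u @ \oo --> r -> v @ \oo --> i -> i != 0 ->
  (fun n => complex.Re ((u n +i* v n)^-1)) @ \oo --> complex.Re ((r +i* i)^-1) /\
  (fun n => complex.Im ((u n +i* v n)^-1)) @ \oo --> complex.Im ((r +i* i)^-1).
Proof.
move=> hu hv hi /=.
have hd : (fun n => u n ^+ 2 + v n ^+ 2) @ \oo --> r ^+ 2 + i ^+ 2.
  have -> : (fun n => u n ^+ 2 + v n ^+ 2) = ((u \* u) + (v \* v))%R.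
    by apply/funext => n /=; rewrite !expr2.
  by rewrite !expr2; apply: cvgD; apply: cvgM.
have d0 : r ^+ 2 + i ^+ 2 != 0.
  by rewrite paddr_eq0 ?sqr_ge0 // negb_and !sqrf_eq0 hi orbT.
have hV : (fun n => (u n ^+ 2 + v n ^+ 2)^-1) @ \oo --> (r ^+ 2 + i ^+ 2)^-1.
  exact: cvgV.
split.
  have -> : (fun n => u n / (u n ^+ 2 + v n ^+ 2)) =
            (u \* (fun n => (u n ^+ 2 + v n ^+ 2)^-1))%R by [].
  exact: cvgM hu hV.
have -> : (fun n => - (v n / (u n ^+ 2 + v n ^+ 2))) =
          (- (v \* (fun n => (u n ^+ 2 + v n ^+ 2)^-1)))%R by [].
by apply: cvgN; exact: cvgM hv hV.
Qed.


Lemma cvgF (mu_ : nat -> probability R R) (mu : probability R R) a b :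
  weak_cvg mu_ mu -> 0 < b ->
  (fun n => complex.Re (cauchyF (mu_ n) (a +i* b))) @ \oo -->
     complex.Re (cauchyF mu (a +i* b)) /\
  (fun n => complex.Im (cauchyF (mu_ n) (a +i* b))) @ \oo -->
     complex.Im (cauchyF mu (a +i* b)).
Proof.
move=> hw hb; apply: cvg_inv.
- exact: cvg_re.
- exact: cvg_im.
- by rewrite lt_eqF // im_neg.
Qed.

End Aux.

Theorem proposition3p14 (R : realType) (mu_ : nat -> probability R R)
    (mu : probability R R) :
  (forall n, classL (mu_ n)) -> weak_cvg mu_ mu -> classL mu.
Proof.
move=> hL hw [a b] /= hb.
have ez : (a +i* b) + (2 * pi)%:C = (a + 2 * pi) +i* b by simpc.
rewrite ez.
set c : R := 2 * pi.
have hn n : cauchyF (mu_ n) ((a + c) +i* b) = cauchyF (mu_ n) (a +i* b) + c%:C.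
  by rewrite -ez; apply: hL.
have eRe : (fun n => complex.Re (cauchyF (mu_ n) ((a + c) +i* b))) =
           (fun n => complex.Re (cauchyF (mu_ n) (a +i* b)) + c).
  by apply/funext => n; rewrite hn; case: (cauchyF (mu_ n) (a +i* b)) => ? ?; simpc.
have eIm : (fun n => complex.Im (cauchyF (mu_ n) ((a + c) +i* b))) =
           (fun n => complex.Im (cauchyF (mu_ n) (a +i* b))).
  by apply/funext => n; rewrite hn; case: (cauchyF (mu_ n) (a +i* b)) => ? ?; simpc.
have [hR' hI'] := cvgF (a + c) hw hb.
have [hR hI] := cvgF a hw hb.
rewrite eRe in hR'; rewrite eIm in hI'.
have hR2 : (fun n => complex.Re (cauchyF (mu_ n) (a +i* b)) + c) @ \oo -->
            complex.Re (cauchyF mu (a +i* b)) + c.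
  by apply: cvgD => //; exact: cvg_cst.
have eqR : complex.Re (cauchyF mu ((a + c) +i* b)) =
           complex.Re (cauchyF mu (a +i* b)) + c.
  exact: (@cvg_unique _ (@Rhausdorff R) _ _ _ _ hR' hR2).
have eqI : complex.Im (cauchyF mu ((a + c) +i* b)) =
           complex.Im (cauchyF mu (a +i* b)).
  exact: (@cvg_unique _ (@Rhausdorff R) _ _ _ _ hI' hI).
move: eqR eqI.
case: (cauchyF mu ((a + c) +i* b)) => p q.
case: (cauchyF mu (a +i* b)) => s t /= -> ->.
by simpc.
Qed.
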